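(* Let $n=2d+1\ge 3$ be odd. If $X$ and $Y$ are $2\times n$ real matrices with $\Delta_{i,j}(X)>0$ and $\Delta_{i,j}(Y)>0$ for all $1\le i<j\le n$, and $\Delta_{i,j}(X)=\Delta_{i,j}(Y)$ for all $(i,j)\in O_1\cup O_d$, then $X$ and $Y$ have the same row span, i.e. $[X]=[Y]$ in $Gr^{>0}(2,n)$.
   Context: For a real $2\times n$ matrix $X$ and $1\le i<j\le n$, $\Delta_{i,j}(X)$ is the determinant of the $2\times2$ submatrix of columns $i,j$. Let $\sigma$ act on strictly increasing pairs $(i,j)$, $1\le i<j\le n$, by $\sigma(i,j)=(i+1,j+1)$ if $j<n$ and $\sigma(i,n)=(1,i+1)$. For $k\in\{1,\dots,n-1\}$, $O_k=\{\sigma^m(1,k+1): m=0,\dots,n-1\}$ (the $k$-th orbit). *)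

(* Defs.v *)
From HB Require Import structures.
From mathcomp Require Import all_boot all_order all_algebra.
From mathcomp Require Import reals.
Set Implicit Arguments. Unset Strict Implicit. Unset Printing Implicit Defensive.
Import Order.TTheory GRing.Theory Num.Theory.
Local Open Scope ring_scope.

(* Plücker coordinate Delta_{i,j}(X): determinant of the 2x2 submatrix on
   columns i, j (0-based ordinals; the paper's column i+1, j+1). *)
Definition pluck (R : comNzRingType) (n : nat) (X : 'M[R]_(2, n)) (i j : 'I_n) : R :=
  X 0 i * X 1 j - X 0 j * X 1 i.

(* The map sigma on 1-based strictly increasing pairs (i,j), 1 <= i < j <= n. *)
Definition sigma_pair (n : nat) (p : nat * nat) : nat * nat :=
  if (p.2 < n)%N then (p.1.+1, p.2.+1) else (1%N, p.1.+1).

Definition in_sigma_orbit (n k : nat) (p : nat * nat) : Prop :=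
  exists2 m : nat, (m < n)%N & iter m (sigma_pair n) (1%N, k.+1) = p.

(* Main.v *)
Require Import Defs.
From HB Require Import structures.
From mathcomp Require Import all_boot all_order all_algebra.
From mathcomp Require Import reals.
From mathcomp Require Import ring zify.
Import Order.TTheory GRing.Theory Num.Theory.
Local Open Scope ring_scope.

Lemma pluck_anti {R : comNzRingType} {n} (X : 'M[R]_(2, n)) i j :
  pluck X i j = - pluck X j i.
Proof. rewrite /pluck; ring. Qed.

Lemma plucker_rel {R : comNzRingType} {n} (X : 'M[R]_(2, n)) a b c e :
  pluck X a c * pluck X b e = pluck X a b * pluck X c e + pluck X a e * pluck X b c.
Proof. rewrite /pluck; ring. Qed.

Lemma cramer {R : comNzRingType} {n} (X : 'M[R]_(2, n)) (r : 'I_2) a b k :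
  pluck X a b * X r k = pluck X k b * X r a + pluck X a k * X r b.
Proof.
have [->|->] : r = 0 \/ r = 1.
  by case: r => [[|[|//]]] Hr; [left|right]; apply/val_inj.
all: rewrite /pluck; ring.
Qed.

Definition Eq {R : realType} {N : nat} (X Y : 'M[R]_(2, N.+1)) (i j : nat) : Prop :=
  pluck X (inord (i %% N.+1)) (inord (j %% N.+1)) =
  pluck Y (inord (i %% N.+1)) (inord (j %% N.+1)).

Arguments Eq {R N} X Y (i j)%_N.

Lemma Eq_congr (R : realType) N (X Y : 'M[R]_(2, N.+1)) i1 j1 i2 j2 :
  (i1 %% N.+1 = i2 %% N.+1)%N -> (j1 %% N.+1 = j2 %% N.+1)%N -> Eq X Y i1 j1 -> Eq X Y i2 j2.
Proof. by rewrite /Eq => -> ->. Qed.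

Lemma Eq_eq (R : realType) N (X Y : 'M[R]_(2, N.+1)) i1 j1 i2 j2 :
  i1 = i2 -> j1 = j2 -> Eq X Y i1 j1 -> Eq X Y i2 j2.
Proof. by move=> -> ->. Qed.

Lemma Eq_sym (R : realType) N (X Y : 'M[R]_(2, N.+1)) i j :
  Eq X Y i j -> Eq X Y j i.
Proof. by rewrite /Eq => H; rewrite (pluck_anti X) (pluck_anti Y) H. Qed.

Lemma Eq_step (R : realType) N (X Y : 'M[R]_(2, N.+1))
  (NZ : forall i j, (i %% N.+1 != j %% N.+1)%N ->
        pluck X (inord (i %% N.+1)) (inord (j %% N.+1)) != 0) a b c e :
  (a %% N.+1 != e %% N.+1)%N -> Eq X Y a c -> Eq X Y b e -> Eq X Y a b ->
  Eq X Y c e -> Eq X Y a e -> Eq X Y b c.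
Proof.
move=> ne Hac Hbe Hab Hce Hae; rewrite /Eq.
apply: (mulfI (NZ _ _ ne)).
set A : 'I_N.+1 := inord (a %% N.+1) in Hac Hab Hae *.
set B : 'I_N.+1 := inord (b %% N.+1) in Hbe Hab *.
set C : 'I_N.+1 := inord (c %% N.+1) in Hac Hce *.
set E : 'I_N.+1 := inord (e %% N.+1) in Hbe Hce Hae *.
have eX : pluck X A E * pluck X B C = pluck X A C * pluck X B E - pluck X A B * pluck X C E.
  by rewrite (plucker_rel X A B C E); ring.
have eY : pluck Y A E * pluck Y B C = pluck Y A C * pluck Y B E - pluck Y A B * pluck Y C E.
  by rewrite (plucker_rel Y A B C E); ring.
by rewrite eX Hac Hbe Hab Hce Hae eY.
Qed.

Definition S {R : realType} {N} (X Y : 'M[R]_(2, N.+1)) k := forall i, Eq X Y i (i + k)%N.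

Arguments S {R N} X Y k%_N.

Lemma S_down (R : realType) N (X Y : 'M[R]_(2, N.+1))
  (NZ : forall i j, (i %% N.+1 != j %% N.+1)%N ->
        pluck X (inord (i %% N.+1)) (inord (j %% N.+1)) != 0) k :
  S X Y 1 -> (k.+2 < N.+1)%N -> S X Y k.+1 -> S X Y k.+2 -> S X Y k.
Proof.
move=> S1 lt Sk1 Sk2 i.
have := @Eq_step R N X Y NZ (i + N) (i + N + 1) (i + N + k.+1) (i + N + k.+2).
move=> H.
have H' : Eq X Y (i + N + 1) (i + N + k.+1).
  apply: H.
  - by rewrite -[X in (X %% _ != _)%N]addn0 eqn_modDl mod0n modn_small.
  - exact: Sk1.
  - apply: Eq_eq (Sk1 (i + N + 1)); lia.
  - exact: S1.
  - apply: Eq_eq (S1 (i + N + k.+1)); lia.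
  - exact: Sk2.
apply: Eq_congr H'.
  by rewrite (_ : (i + N + 1 = i + N.+1)%N) ?modnDr //; lia.
have -> : (i + N + k.+1 = (i + k) + N.+1)%N by lia.
by rewrite modnDr.
Qed.

Lemma iter_sh n t a b : (b + t <= n)%N ->
  iter t (sigma_pair n) (a, b) = (a + t, b + t)%N.
Proof.
elim: t => [|t IH] H; first by rewrite !addn0.
rewrite iterS IH; last by lia.
rewrite /sigma_pair /=.
have -> : (b + t < n)%N by lia.
congr (_, _); lia.
Qed.

Theorem mainTheorem6 (R : realType) (d : nat) (X Y : 'M[R]_(2, d.*2.+1)) :
  (1 <= d)%N ->
  (forall i j : 'I_(d.*2.+1), (i < j)%N -> 0 < pluck X i j) ->
  (forall i j : 'I_(d.*2.+1), (i < j)%N -> 0 < pluck Y i j) ->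
  (forall i j : 'I_(d.*2.+1), (i < j)%N ->
     in_sigma_orbit (d.*2.+1)%N 1 (i.+1, j.+1) \/ in_sigma_orbit (d.*2.+1)%N d (i.+1, j.+1) ->
     pluck X i j = pluck Y i j) ->
  (X == Y)%MS.
Proof.
move=> d1 PX PY H3.
Local Open Scope nat_scope.
set N := d.*2 in X Y PX PY H3 *.
have NE : N = d.*2 by [].
have Nd : (N = d + d)%N by rewrite NE -addnn.
clearbody N.
have NZ : forall i j, (i %% N.+1 != j %% N.+1)%N ->
        pluck X (inord (i %% N.+1)) (inord (j %% N.+1)) != 0%R.
  move=> i j ne.
  have hi : (i %% N.+1 < N.+1)%N by apply: ltn_pmod.
  have hj : (j %% N.+1 < N.+1)%N by apply: ltn_pmod.
  case: (ltngtP (i %% N.+1) (j %% N.+1)) ne => // Hl _.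
    by apply: lt0r_neq0; apply: PX; rewrite !inordK.
  by rewrite pluck_anti oppr_eq0; apply: lt0r_neq0; apply: PX; rewrite !inordK.
have small : forall k, (forall r, (r < N.+1)%N -> Eq X Y r (r + k)) -> S X Y k.
  move=> k Hk i; have HH := Hk (i %% N.+1) (ltn_pmod i (ltn0Sn N)); apply: Eq_congr HH.
    by rewrite modn_mod.
  by rewrite modnDml.
have S1 : S X Y 1.
  apply: small => r hr.
  have [lr|er] : (r < N)%N \/ r = N by lia.
    rewrite /Eq !modn_small //; last by lia.
    apply: H3; first by rewrite !inordK //; lia.
    left; exists r => //.
    rewrite iter_sh; last by lia.
    rewrite !inordK //; last by lia.
    congr (_, _); lia.
  subst r; apply: Eq_sym.
  apply: (@Eq_congr R N X Y 0 N); first by rewrite addn1 modnn mod0n.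
    by [].
  rewrite /Eq mod0n modn_small //.
  apply: H3; first by rewrite !inordK //; lia.
  left; exists N => //.
  have -> : iter N (sigma_pair N.+1) (1%N, 2%N) = iter (N.-1).+1 (sigma_pair N.+1) (1%N, 2%N).
    by rewrite prednK //; lia.
  rewrite iterS iter_sh; last by lia.
  rewrite /sigma_pair /= !inordK //.
  have -> : (2 + N.-1 < N.+1)%N = false by lia.
  congr (_, _); lia.
have Sd : S X Y d.
  apply: small => r hr.
  have [lr|gr] : (r <= d)%N \/ (d < r)%N by lia.
    rewrite /Eq !modn_small //; last by lia.
    apply: H3; first by rewrite !inordK //; lia.
    right; exists r => //.
    rewrite iter_sh; last by lia.
    rewrite !inordK //; last by lia.
    congr (_, _); lia.
  apply: Eq_sym.
  apply: (@Eq_congr R N X Y (r - d.+1) r); last first.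
  - rewrite /Eq !modn_small //; last by lia.
    apply: H3; first by rewrite !inordK //; lia.
    right; exists r => //.
    have -> : r = ((r - d.+1) + d.+1)%N by lia.
    rewrite iterD iterS iter_sh; last by lia.
    rewrite /sigma_pair /=.
    have -> : (d.+1 + d < N.+1)%N = false by lia.
    rewrite iter_sh; last by lia.
    rewrite !inordK //; try lia.
    congr (_, _); lia.
  - by [].
  - have -> : (r + d = (r - d.+1) + N.+1)%N by lia.
    by rewrite modnDr.
have Sd1 : S X Y d.+1.
  move=> i; apply: Eq_sym.
  apply: (@Eq_congr R N X Y (i + d.+1) (i + d.+1 + d)). by []. 2: exact: (Sd _).
  have -> : (i + d.+1 + d = i + N.+1)%N by lia.
  by rewrite modnDr.
have Sall : forall m, (m <= d.+1)%N -> S X Y m.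
  have : forall t, (t <= d)%N -> S X Y (d - t) /\ S X Y (d.+1 - t).
    elim=> [|t IH] ht; first by rewrite !subn0.
    have [A B] := IH (ltnW ht).
    split; last by have -> : (d.+1 - t.+1 = d - t)%N by lia.
    have e1 : (d - t = (d - t.+1).+1)%N by lia.
    have e2 : (d.+1 - t = (d - t.+1).+2)%N by lia.
    rewrite e1 e2 in A B.
    apply: S_down A B => //; lia.
  move=> H m hm.
  have [lm|em] : (m <= d)%N \/ m = d.+1 by lia.
    have := (H (d - m)%N (leq_subr _ _)).1.
    by rewrite subKn.
  by subst m.
have Eall : forall i j : 'I_N.+1, pluck X i j = pluck Y i j.
  have Enat : forall i j, (i <= j)%N -> (j < N.+1)%N -> Eq X Y i j.
    move=> i j hij hj.
    have [le|gt] : (j - i <= d.+1)%N \/ (d.+1 < j - i)%N by lia.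
      apply: Eq_eq (Sall _ le i) => //; lia.
    apply: Eq_sym.
    have hm : (N.+1 - (j - i) <= d.+1)%N by lia.
    apply: (@Eq_congr R N X Y j (j + (N.+1 - (j - i)))) => //; last exact: Sall.
    have -> : (j + (N.+1 - (j - i)) = i + N.+1)%N by lia.
    by rewrite modnDr.
  move=> i j.
  have toE : forall a b : 'I_N.+1, Eq X Y a b -> pluck X a b = pluck Y a b.
    by move=> a b; rewrite /Eq !modn_small // !inord_val.
  case: (leqP i j) => hij.
    by apply: toE; apply: Enat.
  by apply: toE; apply: Eq_sym; apply: Enat => //; apply: ltnW.
Local Open Scope ring_scope.
have sub : forall (X Y : 'M[R]_(2, N.+1)) (a b : 'I_N.+1),
    (forall i j, pluck X i j = pluck Y i j) -> pluck X a b != 0 -> (Y <= X)%MS.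
  move=> X' Y' a b E nz.
  set p := pluck X' a b.
  pose G : 'M[R]_2 := \matrix_(r, s) (if s == 0 then (Y' r a * X' 1 b - Y' r b * X' 1 a) / p
                                      else (Y' r b * X' 0 a - Y' r a * X' 0 b) / p).
  have -> : Y' = G *m X'.
    apply/matrixP => r k.
    rewrite !mxE big_ord_recr big_ord_recr big_ord0 /= !mxE /=.
    apply: (mulfI nz).
    have -> : (widen_ord (leqnSn 1) ord_max : 'I_2) = 0 by apply/val_inj.
    have -> : (ord_max : 'I_2) = 1 by apply/val_inj.
    rewrite /p (E a b) cramer -!E.
    move: nz; rewrite /p /pluck => nz.
    by field.
  exact: submxMl.
have a1 : (1 < N.+1)%N by lia.
apply/andP; split.
  apply: (sub Y X ord0 (Ordinal a1)).
    by move=> i j; rewrite Eall.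
  by apply: lt0r_neq0; apply: PY.
apply: (sub X Y ord0 (Ordinal a1)) => //.
by apply: lt0r_neq0; apply: PX.
Qed.
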